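(* Let $b\ge 2$ and $n\ge 0$ be integers. Then $T_b(n)=\langle\{s_0,s_1,\dots,s_{n+1}\}\rangle$, and $\{s_0,s_1,\dots,s_{n+1}\}$ is the minimal system of generators of $T_b(n)$. In particular the embedding dimension is $e(T_b(n))=n+2$.
   Context: For integers $b\ge 2$, $n\ge 0$, $i\ge0$ put $s_i=(b+1)b^{n+i}-1$ and $T_b(n)=\langle\{s_i:i\in\mathbb{N}\}\rangle$, the submonoid of $(\mathbb{N},+)$ generated by the $s_i$. A set $A$ is a system of generators of a numerical semigroup $S$ if $S=\langle A\rangle$; it is minimal if no proper subset of $A$ generates $S$ (every numerical semigroup has a unique minimal system of generators, which is finite). The embedding dimension $e(S)$ is the cardinality of the minimal system of generators. *)

(* Defs.v *)
From mathcomp Require Import all_boot.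
Set Implicit Arguments. Unset Strict Implicit. Unset Printing Implicit Defensive.

Definition sgen (b n i : nat) : nat := (b + 1) * b ^ (n + i) - 1.

Inductive monoid_gen (A : nat -> Prop) : nat -> Prop :=
  | mg0 : monoid_gen A 0
  | mgA : forall a x, A a -> monoid_gen A x -> monoid_gen A (a + x).

Definition same_monoid (A B : nat -> Prop) : Prop :=
  forall x, monoid_gen A x <-> monoid_gen B x.

Definition generates (A : nat -> Prop) (S : nat -> Prop) : Prop :=
  forall x, monoid_gen A x <-> S x.

Definition minimal_generating (A : nat -> Prop) (S : nat -> Prop) : Prop :=
  generates A S /\
  forall B : nat -> Prop, (forall x, B x -> A x) -> (exists y, A y /\ ~ B y) ->
    ~ generates B S.

Definition T (b n : nat) : nat -> Prop :=
  monoid_gen (fun x => exists i, x = sgen b n i).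

(* Main.v *)
Require Import Defs.
From mathcomp Require Import all_boot.
From mathcomp Require Import zify.
Set Implicit Arguments. Unset Strict Implicit.

Lemma mg_add A x y : monoid_gen A x -> monoid_gen A y -> monoid_gen A (x + y).
Proof.
move=> H; elim: H y => [|a x' Ha Hx IH] y Hy //.
rewrite -addnA; apply: mgA => //; exact: IH.
Qed.

Lemma mg_single (A : nat -> Prop) a : A a -> monoid_gen A a.
Proof. move=> Ha; rewrite -[a]addn0; apply: mgA => //; exact: mg0. Qed.

Lemma mg_mul (A : nat -> Prop) a k : A a -> monoid_gen A (k * a).
Proof.
move=> Ha; elim: k => [|k IH]; first exact: mg0.
rewrite mulSn; apply: mgA => //.
Qed.

Lemma mg_mono (A B : nat -> Prop) : (forall a, A a -> monoid_gen B a) ->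
  forall x, monoid_gen A x -> monoid_gen B x.
Proof.
move=> HAB x H; elim: H => [|a x' Ha Hx IH]; first exact: mg0.
apply: mg_add => //; exact: HAB.
Qed.

Lemma sgen1 b n i : 1 <= b -> sgen b n i + 1 = (b + 1) * b ^ n * b ^ i.
Proof.
move=> hb; rewrite /sgen expnD mulnA.
have : 0 < b ^ n * b ^ i by rewrite muln_gt0 !expn_gt0 hb.
have : 0 < b ^ n by rewrite expn_gt0 hb.
move: (b ^ n) (b ^ i) => P Q H1 H2. nia.
Qed.

Lemma sgen_lt b n i j : 2 <= b -> i < j -> sgen b n i < sgen b n j.
Proof.
move=> hb hij; rewrite /sgen.
have h1 : b ^ (n + i) < b ^ (n + j) by rewrite ltn_exp2l // ltn_add2l.
have h2 : 0 < b ^ (n + i) by rewrite expn_gt0; lia.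
move: (b ^ (n + i)) (b ^ (n + j)) h1 h2 => u v h1 h2. nia.
Qed.

Lemma sgen_le b n i j : 2 <= b -> i <= j -> sgen b n i <= sgen b n j.
Proof.
move=> hb; rewrite leq_eqVlt => /orP [/eqP -> //|h].
exact: ltnW (sgen_lt n hb h).
Qed.

Lemma sgen_inj b n i j : 2 <= b -> sgen b n i = sgen b n j -> i = j.
Proof.
move=> hb h; case: (ltngtP i j) => // hij.
- by have := sgen_lt n hb hij; rewrite h ltnn.
- by have := sgen_lt n hb hij; rewrite h ltnn.
Qed.

Lemma geomR b m : 1 <= b -> exists R, (b - 1) * R + 1 = b ^ m.
Proof.
move=> hb; elim: m => [|m [R HR]]; first by exists 0; rewrite muln0.
exists (b * R + 1); rewrite expnS -HR; nia.
Qed.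

Lemma core c s0 s1 sm P Q R x y :
  s0 + 1 = (c + 2) * P -> s1 + 1 = (c + 2) * P * (c + 1) ->
  sm + 1 = (c + 2) * P * (P * (Q * ((c + 1) * (c + 1)))) ->
  c * R + 1 = P * (Q * ((c + 1) * (c + 1))) ->
  x + R = 1 + Q * s1 -> y + Q * s0 = R ->
  sm = x * s0 + y * s1.
Proof.
move=> e0 e1 em HR hx hy.
have h1 := congr1 (fun z => z * s0) hx.
have h2 := congr1 (fun z => z * s1) hy.
have h3 := congr1 (fun z => z * R) e0.
have h4 := congr1 (fun z => z * R) e1.
have h5 := congr1 (fun z => (c + 2) * P * z) HR.
simpl in *.
lia.
Qed.

Lemma repr_big b n k : 2 <= b ->
  exists x y, sgen b n (n + 2 + k) = x * sgen b n 0 + y * sgen b n 1.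
Proof.
move=> hb.
have [R HR] := geomR (n + 2 + k) (ltnW hb).
have e0 := sgen1 n 0 (ltnW hb).
have e1 := sgen1 n 1 (ltnW hb).
have em := sgen1 n (n + 2 + k) (ltnW hb).
move: (sgen b n 0) (sgen b n 1) (sgen b n (n + 2 + k)) e0 e1 em => s0 s1 sm e0 e1 em.
have [c hc] : exists c, b = c + 1 by exists (b - 1); lia.
have hb2 : b + 1 = c + 2 by lia.
have hb1 : b - 1 = c by lia.
rewrite hb1 in HR. rewrite hb2 in e0 e1 em.
rewrite expn0 muln1 in e0. rewrite expn1 in e1.
have E : b ^ (n + 2 + k) = b ^ n * (b ^ k * (b * b)).
  have e2 : b ^ 2 = b * b by rewrite expnS expn1.
  rewrite !expnD e2; lia.
rewrite E in HR em. rewrite hc in HR em e1 e0.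
have hP : 0 < (c + 1) ^ n by rewrite expn_gt0; lia.
have hQ : 0 < (c + 1) ^ k by rewrite expn_gt0; lia.
have hc1 : 0 < c by lia.
move: ((c + 1) ^ n) ((c + 1) ^ k) e0 e1 em HR hP hQ => P Q e0 e1 em HR hP hQ.
have hcQ : 0 < c * Q by rewrite muln_gt0 hc1.
have hPQ : 0 < P * Q by rewrite muln_gt0 hP.
have i1 : Q * s0 <= R.
  have h := congr1 (fun z => c * Q * z) e0; simpl in h.
  have : c * (Q * s0) <= c * R by lia.
  by rewrite leq_pmul2l.
have g1 : c * Q <= P * Q * (c + 1) * c * c.
  have -> : P * Q * (c + 1) * c * c = c * Q * (P * (c + 1) * c) by lia.
  rewrite -[X in X <= _]muln1 leq_pmul2l // !muln_gt0; lia.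
have g2 : P * Q <= P * Q * c * c.
  rewrite -mulnA -[X in X <= _]muln1 leq_pmul2l // !muln_gt0; lia.
have i2 : R <= 1 + Q * s1.
  have h := congr1 (fun z => c * Q * z) e1; simpl in h.
  have : c * R <= c * (1 + Q * s1) by lia.
  by rewrite leq_pmul2l.
exists (1 + Q * s1 - R), (R - Q * s0).
apply: (core e0 e1 em HR); by rewrite subnK.
Qed.

Theorem mainTheorem4 (b n : nat) (hb : 2 <= b) :
  let G := [seq sgen b n i | i <- iota 0 (n + 2)] in
  generates (fun x => x \in G) (T b n) /\
  minimal_generating (fun x => x \in G) (T b n) /\
  uniq G /\ size G = n + 2.
Proof.
move=> G.
have inG : forall i, i < n + 2 -> sgen b n i \in G.
  by move=> i hi; apply: map_f; rewrite mem_iota.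
have ofG : forall x, x \in G -> exists2 i, i < n + 2 & x = sgen b n i.
  by move=> x /mapP [i]; rewrite mem_iota /= => hi ->; exists i.
have gen : generates (fun x => x \in G) (T b n).
  move=> x; split.
    apply: mg_mono => a /ofG [i _ ->]; apply: mg_single; by exists i.
  apply: mg_mono => a [i ->].
  case: (ltnP i (n + 2)) => hi; first by apply: mg_single; exact: inG.
  have [k ->] : exists k, i = n + 2 + k by exists (i - (n + 2)); lia.
  have [x0 [y0 ->]] := repr_big n k hb.
  apply: mg_add; apply: mg_mul; apply: inG; lia.
split => //; split; last first.
  split; last by rewrite size_map size_iota.
  rewrite map_inj_in_uniq ?iota_uniq // => i j _ _; exact: sgen_inj.
split => // B HB [y [/ofG [j hj ->] nB]] HgB.
have Hs : monoid_gen B (sgen b n j) by apply/HgB; apply: mg_single; exists j.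
pose M := (b + 1) * b ^ n.
have s0M : sgen b n 0 + 1 = M by rewrite /M sgen1 ?expn0 ?muln1 //; lia.
have inv : forall x, monoid_gen B x -> exists N, [/\ M %| x + N,
    N * sgen b n 0 <= x, (N = 0 -> x = 0) & (N = 1 -> x <> sgen b n j)].
  move=> x H; elim: H => [|a x' Ha Hx [N [h1 h2 h3 h4]]].
    by exists 0; split.
  have [i hi ea] := ofG _ (HB _ Ha).
  exists N.+1; split => //.
  - have -> : a + x' + N.+1 = (x' + N) + (sgen b n i + 1) by rewrite ea; lia.
    rewrite dvdn_add // sgen1; [exact: dvdn_mulr (dvdnn _) | lia].
  - have := sgen_le n hb (leq0n i); rewrite -ea; lia.
  - move=> [] /h3 ->; rewrite addn0 => E; by apply: nB; rewrite -E.
have [N [h1 h2 h3 h4]] := inv _ Hs.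
have sjpos : 0 < sgen b n j.
  have := sgen_le n hb (leq0n j); have := sgen1 n 0 (ltnW hb).
  rewrite expn0 muln1. have : 0 < b ^ n by rewrite expn_gt0; lia. nia.
have N1 : 2 <= N.
  case: N h1 h2 h3 h4 => [|[|N]] //= _ _ h3 h4.
  - by have := h3 erefl; lia.
  - by case: (h4 erefl).
have hM : M %| N - 1.
  have ej := sgen1 n j (ltnW hb).
  have : M %| (sgen b n j + 1) + (N - 1).
    by have -> : sgen b n j + 1 + (N - 1) = sgen b n j + N by lia.
  have hd : M %| sgen b n j + 1 by rewrite ej; exact: dvdn_mulr (dvdnn _).
  by rewrite (dvdn_addr _ hd).
have NM : M <= N - 1 by apply: dvdn_leq => //; lia.
have ej := sgen1 n j (ltnW hb).
have bj : b ^ j <= b ^ (n + 1) by rewrite leq_exp2l //; lia.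
have bM : b ^ (n + 1) < M by rewrite /M expnD expn1 mulnC ltn_pmul2r ?expn_gt0; lia.
rewrite -/M in ej.
have bjM : b ^ j < M by lia.
clear inv h1 hM bM; clearbody M.
move: (sgen b n j) (sgen b n 0) (b ^ j) M s0M ej bjM NM h2 => sj s0 Bj MM s0M ej bjM NM h2.
have k1 : (MM + 1) * s0 <= N * s0 by rewrite leq_mul2r; apply/orP; right; lia.
have k2 : (MM + 1) * s0 + 1 = MM * MM by rewrite -s0M; nia.
have k3 : MM * (Bj + 1) <= MM * MM by rewrite leq_mul2l; apply/orP; right; lia.
rewrite mulnDr muln1 in k3.
lia.
Qed.
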